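(* Let $1\le p\le n$, $\beta>0$, let $f:\mathbb{R}^{n\times p}\to\mathbb{R}$ be smooth, and let $X\in\mathbb{R}^{n\times p}_*$. Let $\mathrm{T}_X\mathrm{St}_{X^\top X}=\{\xi\in\mathbb{R}^{n\times p}\mid \xi^\top X+X^\top\xi=0\}$ be the tangent space at $X$ of $\mathrm{St}_{X^\top X}=\{Y\in\mathbb{R}^{n\times p}\mid Y^\top Y=X^\top X\}$. Let $\mathrm{grad}_\beta f(X)$ be the constrained Riemannian gradient, i.e., the unique $\mathrm{grad}_\beta f(X)\in\mathrm{T}_X\mathrm{St}_{X^\top X}$ such that $\mathrm{D}f(X)[\xi]=g^\beta_X(\xi,\mathrm{grad}_\beta f(X))$ for all $\xi\in\mathrm{T}_X\mathrm{St}_{X^\top X}$. Then $\mathrm{grad}_\beta f(X)=\mathrm{Proj}_{X,\beta}(\nabla_\beta f(X))$ and \[\mathrm{grad}_\beta f(X)=\nabla_{\mathrm E}f(X)X^\top X-\frac{1}{2\beta}X\nabla_{\mathrm E}f(X)^\top X+\Big(\frac{1}{2\beta}-1\Big)X(X^\top X)^{-1}X^\top\nabla_{\mathrm E}f(X)X^\top X.\] In particular, for $\beta=\tfrac12$, \[\mathrm{grad}_{1/2} f(X)=\nabla_{\mathrm E}f(X)X^\top X-X\nabla_{\mathrm E}f(X)^\top X=2\operatorname{skew}\big(\nabla_{\mathrm E}f(X)X^\top\big)X.\]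
   Context: $\mathbb{R}^{n\times p}_*$ denotes the set of full-rank (rank $p$) real $n\times p$ matrices, and $\operatorname{skew}(A)=(A-A^\top)/2$. For $\beta>0$ and $X\in\mathbb{R}^{n\times p}_*$, the $\beta$-metric is the inner product on $\mathbb{R}^{n\times p}$ given by \[g^\beta_X(\xi,\zeta)=\mathrm{trace}\Big(\xi^\top\big(\mathrm{I}_n-(1-\beta)X(X^\top X)^{-1}X^\top\big)\zeta\,(X^\top X)^{-1}\Big),\qquad \xi,\zeta\in\mathbb{R}^{n\times p}.\] $\mathrm{Proj}_{X,\beta}:\mathbb{R}^{n\times p}\to\mathrm{T}_X\mathrm{St}_{X^\top X}$ is the orthogonal projection with respect to $g^\beta_X$ (characterized by $g^\beta_X(\xi,Z-\mathrm{Proj}_{X,\beta}(Z))=0$ for all tangent $\xi$). $\nabla_\beta f(X)$ is the unique element of $\mathbb{R}^{n\times p}$ with $\mathrm{D}f(X)[\xi]=g^\beta_X(\xi,\nabla_\beta f(X))$ for all $\xi\in\mathbb{R}^{n\times p}$, and $\nabla_{\mathrm E}f(X)$ is the Euclidean gradient, with $\mathrm{D}f(X)[\xi]=\mathrm{trace}(\xi^\top\nabla_{\mathrm E}f(X))$. *)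

(* Defs.v *)
From HB Require Import structures.
From mathcomp Require Import all_boot all_order all_algebra.
From mathcomp Require Import all_classical all_reals all_analysis.
Set Implicit Arguments. Unset Strict Implicit. Unset Printing Implicit Defensive.
Import Order.TTheory GRing.Theory Num.Theory numFieldNormedType.Exports.
Local Open Scope ring_scope.

Definition tangentSt (R : realType) (n p : nat) (X xi : 'M[R]_(n, p)) : Prop :=
  xi^T *m X + X^T *m xi = 0.

Definition gbeta (R : realType) (n p : nat) (beta : R) (X xi zeta : 'M[R]_(n, p)) : R :=
  \tr (xi^T *m (1%:M - (1 - beta) *: (X *m invmx (X^T *m X) *m X^T))
          *m zeta *m invmx (X^T *m X)).

Definition projSt (R : realType) (n p : nat) (beta : R) (X Z : 'M[R]_(n, p)) : 'M[R]_(n, p) :=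
  xget 0 (fun P : 'M[R]_(n, p) => tangentSt X P /\
            forall xi, tangentSt X xi -> gbeta beta X xi (Z - P) = 0).

Definition skewpart (R : realType) (n : nat) (A : 'M[R]_n) : 'M[R]_n := 2^-1 *: (A - A^T).

(* Main.v *)
Require Import Defs.
From HB Require Import structures.
From mathcomp Require Import all_boot all_order all_algebra.
From mathcomp Require Import all_classical all_reals all_analysis.
From mathcomp Require Import ring lra.
Import Order.TTheory GRing.Theory Num.Theory numFieldNormedType.Exports.
Local Open Scope ring_scope.

Lemma tr_sq_ge0 (R : realFieldType) m k (Y : 'M[R]_(m, k)) : 0 <= \tr (Y^T *m Y).
Proof.
rewrite /mxtrace; apply: sumr_ge0 => i _; rewrite mxE.
by apply: sumr_ge0 => j _; rewrite mxE -expr2 sqr_ge0.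
Qed.

Lemma tr_sq_eq0 (R : realFieldType) m k (Y : 'M[R]_(m, k)) :
  \tr (Y^T *m Y) = 0 -> Y = 0.
Proof.
move=> h; apply/matrixP => i j; rewrite mxE.
move: h; rewrite /mxtrace => h.
have hj : (Y^T *m Y) j j = 0.
  apply: (psumr_eq0P _ h) => // l _; rewrite mxE.
  by apply: sumr_ge0 => l' _; rewrite mxE -expr2 sqr_ge0.
move: hj; rewrite mxE => hj.
have : Y^T j i * Y i j = 0.
  apply: (psumr_eq0P _ hj) => // l _; rewrite mxE -expr2 sqr_ge0 //.
rewrite mxE => /eqP; rewrite -expr2 sqrf_eq0 => /eqP //.
Qed.

Lemma unit_gram (R : realFieldType) n p (X : 'M[R]_(n, p)) :
  \rank X = p -> X^T *m X \in unitmx.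
Proof.
move=> hX; rewrite -row_free_unit.
have hK : kermx (X^T *m X) = 0.
  have h0 := mulmx_ker (X^T *m X).
  move: h0; set K := kermx (X^T *m X) => h0.
  have : (K *m X^T) = 0.
    apply: tr_sq_eq0.
    rewrite trmx_mul trmxK mxtrace_mulC mulmxA -(mulmxA K) h0 mul0mx.
    exact: linear0.
  by move/eqP; rewrite mulmx_free_eq0 ?/row_free ?mxrank_tr ?hX //; move/eqP.
have := mxrank_ker (X^T *m X); rewrite hK mxrank0 => /esym/eqP.
rewrite subn_eq0 => h; rewrite /row_free eqn_leq h rank_leq_col //.
Qed.

Lemma tangent_uniq (R : realType) n p (beta : R) (X eta : 'M[R]_(n,p)) :
  0 < beta -> X^T *m X \in unitmx -> tangentSt X eta ->
  (forall xi, tangentSt X xi -> gbeta beta X xi eta = 0) -> eta = 0.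
Proof.
move=> hb hU ht hg.
set M := X^T *m X in hU.
have hMT : M^T = M by rewrite /M trmx_mul trmxK.
set Mi : 'M[R]_p := invmx M.
have hMMi : M *m Mi = 1%:M by exact: mulmxV.
have hMiM : Mi *m M = 1%:M by exact: mulVmx.
have hMiT : Mi^T = Mi by rewrite /Mi trmx_inv hMT.
set Pi := X *m Mi *m X^T.
have hXPi : X^T *m Pi = X^T by rewrite /Pi !mulmxA -/M hMMi mul1mx.
have hPiX : Pi *m X = X by rewrite /Pi -!mulmxA -/M hMiM mulmx1.
have hPiT : Pi^T = Pi by rewrite /Pi !trmx_mul trmxK hMiT mulmxA.
have hPiPi : Pi *m Pi = Pi by rewrite {1}/Pi -!mulmxA hXPi mulmxA.
set W := X^T *m eta.
have hW : W^T = - W.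
  by rewrite /W trmx_mul trmxK; apply/eqP; rewrite -addr_eq0; apply/eqP; exact: ht.
set Q := 1%:M - Pi.
have hQT : Q^T = Q by rewrite /Q linearB /= trmx1 hPiT.
have hQQ : Q *m Q = Q by rewrite /Q mulmxBl mul1mx mulmxBr mulmx1 hPiPi subrr subr0.
have hXQ : X^T *m Q = 0 by rewrite /Q mulmxBr mulmx1 hXPi subrr.
have hQPi : Q *m Pi = 0 by rewrite /Q mulmxBl mul1mx hPiPi subrr.
set xi := (X *m X^T + Q) *m eta *m M.
have hXxi : X^T *m xi = M *m W *m M.
  by rewrite /xi !mulmxA mulmxDr hXQ addr0 mulmxA -/M -!mulmxA.
have htxi : tangentSt X xi.
  rewrite /tangentSt -(trmxK X) -trmx_mul trmxK hXxi (trmx_mul (M *m W)) (trmx_mul M W) hMT hW.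
  by rewrite mulNmx mulmxN mulmxA addNr.
have := hg xi htxi.
rewrite /gbeta -/M -/Mi -/Pi.
have hxiT : xi^T = M *m eta^T *m (X *m X^T + Q).
  by rewrite /xi trmx_mul hMT trmx_mul linearD /= (trmx_mul X) trmxK hQT mulmxA.
rewrite hxiT.
have hA : (X *m X^T + Q) *m (1%:M - (1 - beta) *: Pi) = beta *: (X *m X^T) + Q.
  rewrite mulmxBr mulmx1 -scalemxAr mulmxDl hQPi addr0 -mulmxA hXPi.
  by rewrite scalerBl scale1r opprB addrC -addrA addKr.
set B := (_ - _ *: Pi).
have hB : (X *m X^T + Q) *m B = beta *: (X *m X^T) + Q by exact: hA.
rewrite -(mulmxA _ _ B) hB.
clearbody M. rewrite mxtrace_mulC !mulmxA hMiM mul1mx.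
have e1 : eta^T *m (X *m X^T) *m eta = W^T *m W by rewrite /W trmx_mul trmxK !mulmxA.
have e2 : eta^T *m Q *m eta = (Q *m eta)^T *m (Q *m eta).
  by rewrite trmx_mul hQT mulmxA -(mulmxA _ Q Q) hQQ.
rewrite mulmxDr mulmxDl mxtraceD -scalemxAr -scalemxAl mxtraceZ e1 e2.
move=> h.
have hW0 : \tr (W^T *m W) = 0.
  apply/eqP; move/eqP: h; rewrite paddr_eq0 ?mulr_ge0 ?tr_sq_ge0 ?ltW // => /andP [].
  by rewrite mulf_eq0 gt_eqF.
have hQ0 : \tr ((Q *m eta)^T *m (Q *m eta)) = 0.
  apply/eqP; move/eqP: h; rewrite paddr_eq0 ?mulr_ge0 ?tr_sq_ge0 ?ltW // => /andP [].
  by [].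
have e : eta = X *m Mi *m W + Q *m eta.
  by rewrite /W /Q mulmxBl mul1mx -/Pi -!mulmxA addrC subrK.
by rewrite e (@tr_sq_eq0 _ _ _ _ hW0) (@tr_sq_eq0 _ _ _ _ hQ0) mulmx0 addr0.
Qed.

Lemma tanB (R : realType) n p (X a b : 'M[R]_(n,p)) :
  tangentSt X a -> tangentSt X b -> tangentSt X (a - b).
Proof.
rewrite /tangentSt => ha hb.
by rewrite linearB /= mulmxBl mulmxBr addrACA -opprD ha hb subrr.
Qed.


Lemma gamma_tan (R : realType) n p (c : R) (X G : 'M[R]_(n,p)) (M : 'M[R]_p) (Pi : 'M[R]_n) :
  X^T *m X = M -> M^T = M -> X^T *m Pi = X^T ->
  tangentSt X (G *m M - c *: (X *m G^T *m X) + (c - 1) *: (Pi *m G *m M)).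
Proof.
move=> hXX hMT hXPi.
set Ga := (X in tangentSt _ X).
have hXG : X^T *m Ga = c *: (X^T *m G *m M - (X^T *m G *m M)^T).
  rewrite /Ga mulmxDr mulmxBr -!scalemxAr !mulmxA hXPi hXX.
  rewrite !trmx_mul trmxK hMT mulmxA.
  move: (X^T *m G *m M) (M *m G^T *m X) => Y Z.
  by apply/matrixP => i j; rewrite !mxE; ring.
rewrite /tangentSt -(trmxK X) -trmx_mul trmxK hXG.
rewrite linearZ /= linearB /= trmxK.
by apply/matrixP => i j; rewrite !mxE; ring.
Qed.

Lemma trN (R : pzRingType) k (A : 'M[R]_k) : \tr (- A) = - \tr A.
Proof. exact: raddfN. Qed.
Lemma trB (R : pzRingType) k (A B : 'M[R]_k) : \tr (A - B) = \tr A - \tr B.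
Proof. exact: raddfB. Qed.

Lemma gbetaB (R : realType) n p (beta : R) (X xi a b : 'M[R]_(n,p)) :
  gbeta beta X xi (a - b) = gbeta beta X xi a - gbeta beta X xi b.
Proof. by rewrite /gbeta mulmxBr mulmxBl trB. Qed.

Lemma gamma_metric (R : realType) n p (beta : R) (X G xi : 'M[R]_(n,p)) (M Mi : 'M[R]_p) (Pi : 'M[R]_n) :
  beta != 0 -> M *m Mi = 1%:M -> Mi^T = Mi -> Pi = X *m Mi *m X^T ->
  Pi *m X = X -> Pi *m Pi = Pi -> tangentSt X xi ->
  \tr (xi^T *m (1%:M - (1 - beta) *: Pi) *m
     (G *m M - (2 * beta)^-1 *: (X *m G^T *m X) + ((2 * beta)^-1 - 1) *: (Pi *m G *m M))
     *m Mi) = \tr (xi^T *m G).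
Proof.
move=> hb hMMi hMiT hPi hPiX hPiPi ht.
set c := (2 * beta)^-1.
have hAG : (1%:M - (1 - beta) *: Pi) *m
     (G *m M - c *: (X *m G^T *m X) + (c - 1) *: (Pi *m G *m M)) =
     G *m M - 2^-1 *: (X *m G^T *m X) - 2^-1 *: (Pi *m G *m M).
  rewrite mulmxBl mul1mx -scalemxAl mulmxDr mulmxBr -!scalemxAr !mulmxA hPiX hPiPi.
  move: (G *m M) (X *m G^T *m X) (Pi *m G *m M) => T1 T2 T3.
  apply/matrixP => i j; rewrite !mxE /c.
  field.
  exact: hb.
rewrite -(mulmxA xi^T) hAG -mulmxA !mulmxBl -!scalemxAl -!(mulmxA _ M Mi) hMMi !mulmx1.
rewrite !mulmxBr -!scalemxAr !trB !mxtraceZ.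
have hS : xi^T *m X = - (X^T *m xi).
  by apply/eqP; rewrite -addr_eq0; apply/eqP; exact: ht.
have ha : \tr (xi^T *m (Pi *m G)) = - \tr (X^T *m xi *m Mi *m X^T *m G).
  by rewrite hPi !mulmxA hS !mulNmx trN.
have hb2 : \tr (xi^T *m (X *m G^T *m X *m Mi)) = \tr (X^T *m xi *m Mi *m X^T *m G).
  rewrite !mulmxA hS !mulNmx trN -mxtrace_tr !trmx_mul !trmxK hMiT.
  by rewrite hS !mulmxN trN opprK !mulmxA -(mulmxA _ X^T xi) mxtrace_mulC !mulmxA.
rewrite ha hb2.
ring.
Qed.
Theorem proposition6 (R : realType) (n p : nat) (hp1 : (1 <= p)%N) (hpn : (p <= n)%N)
  (beta : R) (hbeta : 0 < beta) (f : 'M[R]_(n, p) -> R)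
  (hf : forall Y : 'M[R]_(n, p), differentiable f Y)
  (X : 'M[R]_(n, p)) (hX : \rank X = p)
  (gradE : 'M[R]_(n, p))
  (hgradE : forall xi : 'M[R]_(n, p), 'd f X xi = \tr (xi^T *m gradE))
  (nablab : 'M[R]_(n, p))
  (hnablab : forall xi : 'M[R]_(n, p), 'd f X xi = gbeta beta X xi nablab)
  (grad : 'M[R]_(n, p))
  (hgrad_tan : tangentSt X grad)
  (hgrad : forall xi : 'M[R]_(n, p), tangentSt X xi -> 'd f X xi = gbeta beta X xi grad) :
  grad = projSt beta X nablab /\
  grad = gradE *m (X^T *m X) - (2 * beta)^-1 *: (X *m gradE^T *m X)
         + ((2 * beta)^-1 - 1) *: (X *m invmx (X^T *m X) *m X^T *m gradE *m (X^T *m X)) /\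
  (beta = 2^-1 ->
     grad = gradE *m (X^T *m X) - X *m gradE^T *m X /\
     grad = 2 *: skewpart (gradE *m X^T) *m X).

Proof.
have hU := @unit_gram _ _ _ _ hX.
have hb0 : beta != 0 by rewrite gt_eqF.
have hMT : (X^T *m X)^T = X^T *m X by rewrite trmx_mul trmxK.
have hMMi : (X^T *m X) *m invmx (X^T *m X) = 1%:M by rewrite mulmxV.
have hMiM : invmx (X^T *m X) *m (X^T *m X) = 1%:M by rewrite mulVmx.
have hMiT : (invmx (X^T *m X))^T = invmx (X^T *m X) by rewrite trmx_inv hMT.
have hXPi : X^T *m (X *m invmx (X^T *m X) *m X^T) = X^T.
  by rewrite !mulmxA hMMi mul1mx.
have hPiX : (X *m invmx (X^T *m X) *m X^T) *m X = X.
  by rewrite -!mulmxA hMiM mulmx1.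
have hPiPi : (X *m invmx (X^T *m X) *m X^T) *m (X *m invmx (X^T *m X) *m X^T)
    = X *m invmx (X^T *m X) *m X^T.
  by rewrite !mulmxA hPiX.
set Ga := gradE *m (X^T *m X) - (2 * beta)^-1 *: (X *m gradE^T *m X)
         + ((2 * beta)^-1 - 1) *: (X *m invmx (X^T *m X) *m X^T *m gradE *m (X^T *m X)).
have htG : tangentSt X Ga by exact: (@gamma_tan _ _ _ _ _ _ _ _ _ hMT hXPi).
have hmG : forall xi, tangentSt X xi -> gbeta beta X xi Ga = \tr (xi^T *m gradE).
  move=> xi hxi; rewrite /gbeta.
  have := (@gamma_metric _ _ _ _ _ _ _ _ _ _ hb0 hMMi hMiT erefl hPiX hPiPi hxi). rewrite /Ga. by move=> ->.
have eG : grad = Ga.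
  apply/eqP; rewrite -subr_eq0; apply/eqP.
  apply: (@tangent_uniq _ _ _ _ _ _ hbeta hU); first exact: (@tanB _ _ _ _ _ _ _ _).
  by move=> xi hxi; rewrite gbetaB hmG // -hgrad // hgradE subrr.
split.
  set P := (fun P : 'M[R]_(n, p) => tangentSt X P /\
            forall xi, tangentSt X xi -> gbeta beta X xi (nablab - P) = 0).
  have hPg : P grad.
    split => // xi hxi; by rewrite gbetaB -hnablab -hgrad // subrr.
  rewrite /projSt -/P; symmetry; apply: xget_unique => // y [h1 h2].
  move: hPg => [_ h3].
  apply/eqP; rewrite -subr_eq0; apply/eqP.
  apply: (@tangent_uniq _ _ _ _ _ _ hbeta hU); first exact: (@tanB _ _ _ _ _ _ _ _).
  move=> xi hxi; have := h2 xi hxi; have := h3 xi hxi.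
  rewrite !gbetaB => e1 e2.
  move: e1 e2; lra.
split; first exact: eG.
move=> hb2; rewrite eG /Ga hb2 mulfV ?pnatr_eq0 // invr1 subrr scale0r addr0 scale1r.
split => //.
rewrite /skewpart scalerA mulfV ?pnatr_eq0 // scale1r.
by rewrite trmx_mul trmxK mulmxBl mulmxA.
Qed.
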